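(* Let $\mathcal K$ be a finitely complete 2-category with a good yoneda structure. Let $C$ be small, and let $i:M\to\mathcal PC$ and $f:C\to A$ with $M$ and $f$ admissible; let $p:y_C/i\to C$, $q:y_C/i\to M$ be the projections of the lax pullback of $y_C$ and $i$. Then the colimit of $f$ weighted by $i$ exists iff there is an admissible 1-cell $k:M\to A$ and a 2-cell $\phi:fp\Rightarrow kq$ exhibiting $k$ as a pointwise left extension of $fp$ along $q$. When this is the case, $k\cong\mathrm{col}(i,f)$.
   Context: For $f:A\to B$, $g:C\to B$ the lax pullback $f/g$ has projections $p:f/g\to A$, $q:f/g\to C$ and universal 2-cell $\lambda:fp\Rightarrow gq$. Given $f:A\to C$, $g:A\to B$, $h:B\to C$, a 2-cell $\phi:f\Rightarrow hg$ exhibits $h$ as a left extension of $f$ along $g$ if for every $k:B\to C$, $\kappa\mapsto(\kappa g)\cdot\phi$ is a bijection from 2-cells $h\Rightarrow k$ to 2-cells $f\Rightarrow kg$; it exhibits $g$ as a left lifting of $f$ along (through) $h$ if for every $k:A\to B$, $\kappa\mapsto(h\kappa)\cdot\phi$ is a bijection from 2-cells $g\Rightarrow k$ to 2-cells $f\Rightarrow hk$; the lifting is absolute if $\phi j$ exhibits $gj$ as a left lifting of $fj$ along $h$ for all $j:D\to A$. $\phi$ exhibits $h$ as a pointwise left extension of $f$ along $g$ if for every $c:X\to B$, with lax pullback $p:g/c\to A$, $q:g/c\to X$, $\lambda:gp\Rightarrow cq$, $(h\lambda)\cdot(\phi p)$ exhibits $hc$ as a left extension of $fp$ along $q$. A good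 yoneda structure: a class of admissible 1-cells with $fg$ admissible whenever $f$ is; $A$ admissible when $1_A$ is; for admissible $A$ an object $\mathcal PA$ and admissible $y_A:A\to\mathcal PA$; for $f:A\to B$ with $A$, $f$ admissible a 1-cell $B(f,1):B\to\mathcal PA$ and 2-cell $\chi^f:y_A\Rightarrow B(f,1)f$; such that (i) $\chi^f$ exhibits $f$ as an absolute left lifting of $y_A$ through $B(f,1)$; (ii) if $A$, $f:A\to B$ admissible and $\psi:y_A\Rightarrow gf$ exhibits $f$ as an absolute left lifting of $y_A$ along $g$, then $\psi$ exhibits $g$ as a pointwise left extension of $y_A$ along $f$. $C$ is small if $C$ and $\mathcal PC$ are admissible. A colimit of $f$ weighted by $i$ is an admissible $\mathrm{col}(i,f):M\to A$ with a 2-cell $\eta:i\Rightarrow A(f,1)\mathrm{col}(i,f)$ exhibiting $\mathrm{col}(i,f)$ as an absolute left lifting of $i$ through $A(f,1)$. *)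

(* Defs.v *)
Definition cast2 {H : Type} (C : H -> H -> Type) {f g f' g' : H}
  (e1 : f = f') (e2 : g = g') (x : C f g) : C f' g' :=
  match e1 in _ = f1 return C f1 g' with
  | eq_refl => match e2 in _ = g1 return C f g1 with eq_refl => x end
  end.
Arguments cast2 {H} C {f g f' g'} e1 e2 x.

(* A (strict) 2-category, presented via vertical composition and whiskering
   (sesquicategory + interchange law). [comp1 g f] is "g after f". *)
Record cat2 := Cat2 {
  ob : Type;
  hom : ob -> ob -> Type;
  cell : forall A B : ob, hom A B -> hom A B -> Type;
  id1 : forall A : ob, hom A A;
  comp1 : forall A B C : ob, hom B C -> hom A B -> hom A C;
  id2 : forall (A B : ob) (f : hom A B), cell A B f f;
  vcomp : forall (A B : ob) (f g h : hom A B),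
      cell A B g h -> cell A B f g -> cell A B f h;
  whiskl : forall (A B C : ob) (h : hom B C) (f g : hom A B),
      cell A B f g -> cell A C (comp1 _ _ _ h f) (comp1 _ _ _ h g);
  whiskr : forall (A B C : ob) (f g : hom B C) (k : hom A B),
      cell B C f g -> cell A C (comp1 _ _ _ f k) (comp1 _ _ _ g k);
  comp1_assoc : forall (A B C D : ob) (h : hom C D) (g : hom B C) (f : hom A B),
      comp1 _ _ _ h (comp1 _ _ _ g f) = comp1 _ _ _ (comp1 _ _ _ h g) f;
  comp1_idl : forall (A B : ob) (f : hom A B), comp1 _ _ _ (id1 B) f = f;
  comp1_idr : forall (A B : ob) (f : hom A B), comp1 _ _ _ f (id1 A) = f;
  vcomp_assoc : forall (A B : ob) (f g h k : hom A B) (c : cell _ _ h k)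
      (b : cell _ _ g h) (a : cell _ _ f g),
      vcomp _ _ _ _ _ c (vcomp _ _ _ _ _ b a) = vcomp _ _ _ _ _ (vcomp _ _ _ _ _ c b) a;
  vcomp_idl : forall (A B : ob) (f g : hom A B) (a : cell _ _ f g),
      vcomp _ _ _ _ _ (id2 _ _ g) a = a;
  vcomp_idr : forall (A B : ob) (f g : hom A B) (a : cell _ _ f g),
      vcomp _ _ _ _ _ a (id2 _ _ f) = a;
  whiskl_id2 : forall (A B C : ob) (h : hom B C) (f : hom A B),
      whiskl _ _ _ h _ _ (id2 _ _ f) = id2 _ _ (comp1 _ _ _ h f);
  whiskl_vcomp : forall (A B C : ob) (h : hom B C) (f g k : hom A B)
      (b : cell _ _ g k) (a : cell _ _ f g),
      whiskl _ _ _ h _ _ (vcomp _ _ _ _ _ b a)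
      = vcomp _ _ _ _ _ (whiskl _ _ _ h _ _ b) (whiskl _ _ _ h _ _ a);
  whiskr_id2 : forall (A B C : ob) (f : hom B C) (k : hom A B),
      whiskr _ _ _ _ _ k (id2 _ _ f) = id2 _ _ (comp1 _ _ _ f k);
  whiskr_vcomp : forall (A B C : ob) (f g h : hom B C) (k : hom A B)
      (b : cell _ _ g h) (a : cell _ _ f g),
      whiskr _ _ _ _ _ k (vcomp _ _ _ _ _ b a)
      = vcomp _ _ _ _ _ (whiskr _ _ _ _ _ k b) (whiskr _ _ _ _ _ k a);
  whiskl_id1 : forall (A B : ob) (f g : hom A B) (a : cell _ _ f g),
      cast2 (cell A B) (comp1_idl _ _ f) (comp1_idl _ _ g)
        (whiskl _ _ _ (id1 B) _ _ a) = a;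
  whiskl_comp1 : forall (A B C D : ob) (h' : hom C D) (h : hom B C)
      (f g : hom A B) (a : cell _ _ f g),
      whiskl _ _ _ (comp1 _ _ _ h' h) _ _ a
      = cast2 (cell A D) (comp1_assoc _ _ _ _ h' h f) (comp1_assoc _ _ _ _ h' h g)
          (whiskl _ _ _ h' _ _ (whiskl _ _ _ h _ _ a));
  whiskr_id1 : forall (A B : ob) (f g : hom A B) (a : cell _ _ f g),
      cast2 (cell A B) (comp1_idr _ _ f) (comp1_idr _ _ g)
        (whiskr _ _ _ _ _ (id1 A) a) = a;
  whiskr_comp1 : forall (A B C D : ob) (f g : hom C D) (k : hom B C)
      (k' : hom A B) (a : cell _ _ f g),
      whiskr _ _ _ _ _ k' (whiskr _ _ _ _ _ k a)
      = cast2 (cell A D) (comp1_assoc _ _ _ _ f k k') (comp1_assoc _ _ _ _ g k k')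
          (whiskr _ _ _ _ _ (comp1 _ _ _ k k') a);
  whisk_lr : forall (A B C D : ob) (h : hom C D) (f g : hom B C) (k : hom A B)
      (a : cell _ _ f g),
      whiskr _ _ _ _ _ k (whiskl _ _ _ h _ _ a)
      = cast2 (cell A D) (comp1_assoc _ _ _ _ h f k) (comp1_assoc _ _ _ _ h g k)
          (whiskl _ _ _ h _ _ (whiskr _ _ _ _ _ k a));
  interchange : forall (A B C : ob) (f f' : hom B C) (g g' : hom A B)
      (b : cell _ _ f f') (a : cell _ _ g g'),
      vcomp _ _ _ _ _ (whiskr _ _ _ _ _ g' b) (whiskl _ _ _ f _ _ a)
      = vcomp _ _ _ _ _ (whiskl _ _ _ f' _ _ a) (whiskr _ _ _ _ _ g b)
}.

Arguments hom {K} : rename.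
Arguments cell {K A B} : rename.
Arguments id1 {K} : rename.
Arguments comp1 {K A B C} : rename.
Arguments id2 {K A B} : rename.
Arguments vcomp {K A B f g h} : rename.
Arguments whiskl {K A B C} h {f g} : rename.
Arguments whiskr {K A B C f g} k : rename.
Arguments comp1_assoc {K A B C D} h g f : rename.

Notation "g ⊚ f" := (comp1 g f) (at level 40, left associativity).

Section TwoCatNotions.
Context {K : cat2}.

Definition bijective_map {X Y : Type} (F : X -> Y) : Prop :=
  (forall x x', F x = F x' -> x = x') /\ (forall y, exists x, F x = y).

Definition is_left_extension {A B C : ob K} (f : hom A C) (g : hom A B)
  (h : hom B C) (phi : cell f (h ⊚ g)) : Prop :=
  forall k : hom B C, bijective_map (fun kappa : cell h k => vcomp (whiskr g kappa) phi).

Definition is_left_lifting {A B C : ob K} (f : hom A C) (g : hom A B)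
  (h : hom B C) (phi : cell f (h ⊚ g)) : Prop :=
  forall k : hom A B, bijective_map (fun kappa : cell g k => vcomp (whiskl h kappa) phi).

Definition whiskr_assoc {A B C D : ob K} {f : hom A C} (h : hom B C) (g : hom A B)
  (phi : cell f (h ⊚ g)) (j : hom D A) : cell (f ⊚ j) (h ⊚ (g ⊚ j)) :=
  cast2 (@cell K D C) eq_refl (eq_sym (comp1_assoc h g j)) (whiskr j phi).

Definition is_abs_left_lifting {A B C : ob K} (f : hom A C) (g : hom A B)
  (h : hom B C) (phi : cell f (h ⊚ g)) : Prop :=
  forall (D : ob K) (j : hom D A),
    is_left_lifting (f ⊚ j) (g ⊚ j) h (whiskr_assoc h g phi j).

Definition lax_whisk {A B C P X : ob K} {f : hom A B} {g : hom C B}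
  {p : hom P A} {q : hom P C} (lam : cell (f ⊚ p) (g ⊚ q)) (t : hom X P)
  : cell (f ⊚ (p ⊚ t)) (g ⊚ (q ⊚ t)) :=
  cast2 (@cell K X B) (eq_sym (comp1_assoc f p t)) (eq_sym (comp1_assoc g q t))
    (whiskr t lam).

Definition is_lax_pullback {A B C P : ob K} (f : hom A B) (g : hom C B)
  (p : hom P A) (q : hom P C) (lam : cell (f ⊚ p) (g ⊚ q)) : Prop :=
  (forall (X : ob K) (u : hom X A) (v : hom X C) (al : cell (f ⊚ u) (g ⊚ v)),
     exists! t : hom X P,
       exists (e1 : p ⊚ t = u) (e2 : q ⊚ t = v),
         cast2 (@cell K X B) (f_equal (comp1 f) e1) (f_equal (comp1 g) e2)
           (lax_whisk lam t) = al)
  /\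
  (forall (X : ob K) (t t' : hom X P) (b1 : cell (p ⊚ t) (p ⊚ t'))
          (b2 : cell (q ⊚ t) (q ⊚ t')),
     vcomp (whiskl g b2) (lax_whisk lam t) = vcomp (lax_whisk lam t') (whiskl f b1) ->
     exists! s : cell t t', whiskl p s = b1 /\ whiskl q s = b2).

Definition is_terminal (T : ob K) : Prop :=
  forall X : ob K, (exists! t : hom X T, True) /\
                   (forall t t' : hom X T, exists! s : cell t t', True).

Definition pb_eq {A B C P X : ob K} {f : hom A B} {g : hom C B}
  {p : hom P A} {q : hom P C} (E : f ⊚ p = g ⊚ q) (t : hom X P)
  : f ⊚ (p ⊚ t) = g ⊚ (q ⊚ t) :=
  eq_trans (comp1_assoc f p t)
    (eq_trans (f_equal (fun z => z ⊚ t) E) (eq_sym (comp1_assoc g q t))).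

Definition is_pullback {A B C P : ob K} (f : hom A B) (g : hom C B)
  (p : hom P A) (q : hom P C) (E : f ⊚ p = g ⊚ q) : Prop :=
  (forall (X : ob K) (u : hom X A) (v : hom X C), f ⊚ u = g ⊚ v ->
     exists! t : hom X P, p ⊚ t = u /\ q ⊚ t = v)
  /\
  (forall (X : ob K) (t t' : hom X P) (b1 : cell (p ⊚ t) (p ⊚ t'))
          (b2 : cell (q ⊚ t) (q ⊚ t')),
     cast2 (@cell K X B) (pb_eq E t) (pb_eq E t') (whiskl f b1) = whiskl g b2 ->
     exists! s : cell t t', whiskl p s = b1 /\ whiskl q s = b2).

(* Finite completeness: terminal object, pullbacks and lax pullbacks (comma
   objects); these generate all finite weighted 2-limits. *)
Definition finitely_complete : Prop :=
  (exists T : ob K, is_terminal T)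
  /\ (forall (A B C : ob K) (f : hom A B) (g : hom C B),
        exists (P : ob K) (p : hom P A) (q : hom P C) (E : f ⊚ p = g ⊚ q),
          is_pullback f g p q E)
  /\ (forall (A B C : ob K) (f : hom A B) (g : hom C B),
        exists (P : ob K) (p : hom P A) (q : hom P C) (lam : cell (f ⊚ p) (g ⊚ q)),
          is_lax_pullback f g p q lam).

Definition pointwise_cell {A B C X P : ob K} {f : hom A C} {g : hom A B}
  {h : hom B C} (phi : cell f (h ⊚ g)) {c : hom X B} {p : hom P A} {q : hom P X}
  (lam : cell (g ⊚ p) (c ⊚ q)) : cell (f ⊚ p) ((h ⊚ c) ⊚ q) :=
  cast2 (@cell K P C) eq_refl (comp1_assoc h c q)
    (vcomp (whiskl h lam) (whiskr_assoc h g phi p)).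

Definition is_pointwise_left_extension {A B C : ob K} (f : hom A C) (g : hom A B)
  (h : hom B C) (phi : cell f (h ⊚ g)) : Prop :=
  forall (X : ob K) (c : hom X B) (P : ob K) (p : hom P A) (q : hom P X)
         (lam : cell (g ⊚ p) (c ⊚ q)),
    is_lax_pullback g c p q lam ->
    is_left_extension (f ⊚ p) q (h ⊚ c) (pointwise_cell phi lam).

Definition iso1 {A B : ob K} (k c : hom A B) : Prop :=
  exists (a : cell k c) (b : cell c k), vcomp b a = id2 k /\ vcomp a b = id2 c.

End TwoCatNotions.

(* A good yoneda structure on K.  PP, yon, homf1 (= B(f,1)) and chi are given
   as total operations; the axioms only constrain them on admissible data. *)
Record good_yoneda_structure (K : cat2) := GoodYoneda {
  admissible : forall A B : ob K, hom A B -> Prop;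
  PP : ob K -> ob K;
  yon : forall A : ob K, hom A (PP A);
  homf1 : forall (A B : ob K) (f : hom A B), hom B (PP A);
  chi : forall (A B : ob K) (f : hom A B), cell (yon A) (homf1 _ _ f ⊚ f);
  adm_ideal : forall (A B C : ob K) (f : hom B C) (g : hom A B),
      admissible _ _ f -> admissible _ _ (f ⊚ g);
  adm_yon : forall A : ob K, admissible _ _ (id1 A) -> admissible _ _ (yon A);
  yoneda_i : forall (A B : ob K) (f : hom A B),
      admissible _ _ (id1 A) -> admissible _ _ f ->
      is_abs_left_lifting (yon A) f (homf1 _ _ f) (chi _ _ f);
  yoneda_ii_good : forall (A B : ob K) (f : hom A B) (g : hom B (PP A))
      (psi : cell (yon A) (g ⊚ f)),
      admissible _ _ (id1 A) -> admissible _ _ f ->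
      is_abs_left_lifting (yon A) f g psi ->
      is_pointwise_left_extension (yon A) f g psi
}.

Arguments admissible {K} Y {A B} : rename.
Arguments PP {K} Y : rename.
Arguments yon {K} Y : rename.
Arguments homf1 {K} Y {A B} : rename.
Arguments chi {K} Y {A B} : rename.

Definition adm_ob {K : cat2} (Y : good_yoneda_structure K) (A : ob K) : Prop :=
  admissible Y (id1 A).

Definition small {K : cat2} (Y : good_yoneda_structure K) (C : ob K) : Prop :=
  adm_ob Y C /\ adm_ob Y (PP Y C).

Definition is_colimit {K : cat2} (Y : good_yoneda_structure K) {C A M : ob K}
  (i : hom M (PP Y C)) (f : hom C A) (c : hom M A)
  (eta : cell i (homf1 Y f ⊚ c)) : Prop :=
  admissible Y c /\ is_abs_left_lifting i c (homf1 Y f) eta.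

(* Main.v *)
Require Import Defs.
From Stdlib Require Import ProofIrrelevance.


Section Ceq.
Context {K : cat2}.

Definition ceq {A B : ob K} {f g f' g' : hom A B} (x : cell f g) (y : cell f' g') : Prop :=
  exists (e1 : f = f') (e2 : g = g'), cast2 (@cell K A B) e1 e2 x = y.

Local Infix "≈" := ceq (at level 70).

Lemma ceq_refl {A B} {f g : hom A B} (x : cell f g) : x ≈ x.
Proof. exists eq_refl, eq_refl. reflexivity. Qed.

Lemma ceq_sym {A B} {f g f' g' : hom A B} (x : cell f g) (y : cell f' g') : x ≈ y -> y ≈ x.
Proof. intros [e1 [e2 H]]. destruct e1, e2. simpl in H. subst. apply ceq_refl. Qed.

Lemma ceq_trans {A B} {f g f' g' f'' g'' : hom A B} (x : cell f g) (y : cell f' g') (z : cell f'' g'') :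
  x ≈ y -> y ≈ z -> x ≈ z.
Proof.
  intros [e1 [e2 H]] [e3 [e4 H']]. destruct e1, e2, e3, e4. simpl in *. subst. apply ceq_refl.
Qed.

Lemma ceq_cast {A B} {f g f' g' : hom A B} (e1 : f = f') (e2 : g = g') (x : cell f g) :
  cast2 (@cell K A B) e1 e2 x ≈ x.
Proof. apply ceq_sym. exists e1, e2. reflexivity. Qed.

Lemma ceq_eq {A B} {f g : hom A B} (x y : cell f g) : x ≈ y -> x = y.
Proof.
  intros [e1 [e2 H]]. rewrite (proof_irrelevance _ e1 eq_refl), (proof_irrelevance _ e2 eq_refl) in H.
  exact H.
Qed.

Lemma ceq_src {A B} {f g f' g' : hom A B} (x : cell f g) (y : cell f' g') : x ≈ y -> f = f'.
Proof. intros [e1 _]. exact e1. Qed.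
Lemma ceq_tgt {A B} {f g f' g' : hom A B} (x : cell f g) (y : cell f' g') : x ≈ y -> g = g'.
Proof. intros [_ [e2 _]]. exact e2. Qed.

Lemma vcomp_ceq {A B} {f g h f' g' h' : hom A B} (a : cell f g) (b : cell g h)
  (a' : cell f' g') (b' : cell g' h') : a ≈ a' -> b ≈ b' -> vcomp b a ≈ vcomp b' a'.
Proof.
  intros [e1 [e2 H]] [e3 [e4 H']]. destruct e1, e2, e4. simpl in *.
  rewrite (proof_irrelevance _ e3 eq_refl) in H'. simpl in H'. subst. apply ceq_refl.
Qed.

Lemma whiskl_ceq {A B C} (h h' : hom B C) {f g f' g' : hom A B} (a : cell f g) (a' : cell f' g') :
  h = h' -> a ≈ a' -> whiskl h a ≈ whiskl h' a'.
Proof. intros E [e1 [e2 H]]. destruct E, e1, e2. simpl in H. subst. apply ceq_refl. Qed.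

Lemma whiskr_ceq {A B C} (k k' : hom A B) {f g f' g' : hom B C} (a : cell f g) (a' : cell f' g') :
  k = k' -> a ≈ a' -> whiskr k a ≈ whiskr k' a'.
Proof. intros E [e1 [e2 H]]. destruct E, e1, e2. simpl in H. subst. apply ceq_refl. Qed.

Lemma id2_ceq {A B} (f f' : hom A B) : f = f' -> id2 f ≈ id2 f'.
Proof. intros E. destruct E. apply ceq_refl. Qed.

Lemma whiskl_comp1_ceq {A B C D} (h' : hom C D) (h : hom B C) {f g : hom A B} (a : cell f g) :
  whiskl (h' ⊚ h) a ≈ whiskl h' (whiskl h a).
Proof. rewrite whiskl_comp1. apply ceq_cast. Qed.

Lemma whiskr_comp1_ceq {A B C D} {f g : hom C D} (k : hom B C) (k' : hom A B) (a : cell f g) :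
  whiskr k' (whiskr k a) ≈ whiskr (k ⊚ k') a.
Proof. rewrite whiskr_comp1. apply ceq_cast. Qed.

Lemma whisk_lr_ceq {A B C D} (h : hom C D) {f g : hom B C} (k : hom A B) (a : cell f g) :
  whiskr k (whiskl h a) ≈ whiskl h (whiskr k a).
Proof. rewrite whisk_lr. apply ceq_cast. Qed.

Lemma whiskl_id1_ceq {A B} {f g : hom A B} (a : cell f g) : whiskl (id1 B) a ≈ a.
Proof. pose proof (whiskl_id1 K A B f g a) as H. eapply ceq_trans; [apply ceq_sym, ceq_cast|]. rewrite H. apply ceq_refl. Qed.

Lemma whiskr_id1_ceq {A B} {f g : hom A B} (a : cell f g) : whiskr (id1 A) a ≈ a.
Proof. pose proof (whiskr_id1 K A B f g a) as H. eapply ceq_trans; [apply ceq_sym, ceq_cast|]. rewrite H. apply ceq_refl. Qed.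

Lemma vcomp_idr_ceq {A B} {f g h f' : hom A B} (a : cell f g) (b : cell g h) :
  a ≈ id2 f' -> vcomp b a ≈ b.
Proof.
  intros [e1 [e2 H]]. destruct e1. simpl in H. destruct e2. simpl in H. subst.
  rewrite vcomp_idr. apply ceq_refl.
Qed.

Lemma vcomp_idl_ceq {A B} {f g h h' : hom A B} (a : cell f g) (b : cell g h) :
  b ≈ id2 h' -> vcomp b a ≈ a.
Proof.
  intros [e1 [e2 H]]. destruct e2. simpl in H. destruct e1. simpl in H. subst.
  rewrite vcomp_idl. apply ceq_refl.
Qed.

End Ceq.

Local Infix "≈" := ceq (at level 70).


Lemma bij_square {X Y Z W : Type} (Phi : X -> Y) (H1 : X -> Z) (G : Y -> W) (H2 : Z -> W) :
  (forall x, G (Phi x) = H2 (H1 x)) -> bijective_map G -> bijective_map H2 ->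
  (bijective_map H1 <-> bijective_map Phi).
Proof.
  intros E [Gi Gs] [Hi Hs]. split.
  - intros [H1i H1s]. split.
    + intros x x' Ex. apply H1i, Hi. rewrite <- !E. now rewrite Ex.
    + intros y. destruct (Hs (G y)) as [z Hz]. destruct (H1s z) as [x Hx].
      exists x. apply Gi. rewrite E, Hx. exact Hz.
  - intros [Pi Ps]. split.
    + intros x x' Ex. apply Pi, Gi. rewrite !E. now rewrite Ex.
    + intros z. destruct (Gs (H2 z)) as [y Hy]. destruct (Ps y) as [x Hx].
      exists x. apply Hi. rewrite <- E, Hx. exact Hy.
Qed.

Lemma bij_comp {X Y Z : Type} (F : X -> Y) (G : Y -> Z) :
  bijective_map F -> bijective_map G -> bijective_map (fun x => G (F x)).
Proof.
  intros [Fi Fs] [Gi Gs]. split.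
  - intros x x' E. apply Fi, Gi, E.
  - intros z. destruct (Gs z) as [y Hy]. destruct (Fs y) as [x Hx]. exists x. congruence.
Qed.

Lemma bij_ext {X Y : Type} (F G : X -> Y) : (forall x, F x = G x) -> bijective_map F -> bijective_map G.
Proof.
  intros E [Fi Fs]. split.
  - intros x x' H. apply Fi. rewrite !E. exact H.
  - intros y. destruct (Fs y) as [x Hx]. exists x. rewrite <- E. exact Hx.
Qed.

Lemma bij_ceq {K : cat2} {A B A' B' : ob K} {a b a' b' : hom A B} {c d c' d' : hom A' B'}
  (F1 : cell a b -> cell c d) (F2 : cell a' b' -> cell c' d') :
  a = a' -> b = b' -> c = c' -> d = d' ->
  (forall x x', x ≈ x' -> F1 x ≈ F2 x') -> bijective_map F1 -> bijective_map F2.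
Proof.
  intros e1 e2 e3 e4 H. destruct e1, e2, e3, e4.
  apply bij_ext. intros x. apply ceq_eq, H, ceq_refl.
Qed.

Lemma bij_ceq_cod {K : cat2} {X : Type} {A' B' : ob K} {c d c' d' : hom A' B'}
  (F1 : X -> cell c d) (F2 : X -> cell c' d') :
  c = c' -> d = d' -> (forall x, F1 x ≈ F2 x) -> bijective_map F1 -> bijective_map F2.
Proof.
  intros e3 e4 H. destruct e3, e4.
  apply bij_ext. intros x. apply ceq_eq, H.
Qed.

Section Unf.
Context {K : cat2}.

Lemma whiskr_assoc_ceq {A B C D : ob K} {f : hom A C} (h : hom B C) (g : hom A B)
  (phi : cell f (h ⊚ g)) (j : hom D A) : whiskr_assoc h g phi j ≈ whiskr j phi.
Proof. apply ceq_cast. Qed.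

Lemma lax_whisk_ceq {A B C P X : ob K} {f : hom A B} {g : hom C B}
  {p : hom P A} {q : hom P C} (lam : cell (f ⊚ p) (g ⊚ q)) (t : hom X P) :
  lax_whisk lam t ≈ whiskr t lam.
Proof. apply ceq_cast. Qed.

Lemma pointwise_cell_ceq {A B C X P : ob K} {f : hom A C} {g : hom A B}
  {h : hom B C} (phi : cell f (h ⊚ g)) {c : hom X B} {p : hom P A} {q : hom P X}
  (lam : cell (g ⊚ p) (c ⊚ q)) :
  pointwise_cell phi lam ≈ vcomp (whiskl h lam) (whiskr_assoc h g phi p).
Proof. apply ceq_cast. Qed.

Lemma abs_lifting_lifting {A B C : ob K} (f : hom A C) (g : hom A B)
  (h : hom B C) (phi : cell f (h ⊚ g)) :
  is_abs_left_lifting f g h phi -> is_left_lifting f g h phi.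
Proof.
  intros Hab k. specialize (Hab A (id1 A) (k ⊚ id1 A)).
  assert (HT : bijective_map (fun kappa : cell g k => whiskr (id1 A) kappa)).
  { split.
    - intros x x' E. apply ceq_eq. eapply ceq_trans; [apply ceq_sym, whiskr_id1_ceq|].
      rewrite E. apply whiskr_id1_ceq.
    - intros y. exists (cast2 (@cell K A B) (comp1_idr _ _ _ g) (comp1_idr _ _ _ k) y).
      apply ceq_eq. eapply ceq_trans; [apply whiskr_id1_ceq|]. apply ceq_cast. }
  pose proof (bij_comp _ _ HT Hab) as H2. simpl in H2.
  eapply bij_ceq_cod; [| | | exact H2]; [apply comp1_idr | rewrite comp1_idr; reflexivity |].
  intros x. apply vcomp_ceq.
  - eapply ceq_trans; [apply whiskr_assoc_ceq|]. apply whiskr_id1_ceq.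
  - apply whiskl_ceq; [reflexivity|]. apply whiskr_id1_ceq.
Qed.

Lemma liftings_iso {A B C : ob K} (f : hom A C) (g g' : hom A B)
  (h : hom B C) (phi : cell f (h ⊚ g)) (phi' : cell f (h ⊚ g')) :
  is_left_lifting f g h phi -> is_left_lifting f g' h phi' -> iso1 g g'.
Proof.
  intros H1 H2.
  destruct (proj2 (H1 g') phi') as [a Ha].
  destruct (proj2 (H2 g) phi) as [b Hb].
  exists a, b. split.
  - apply (proj1 (H1 g)). simpl. rewrite whiskl_vcomp, <- vcomp_assoc, Ha, Hb.
    rewrite whiskl_id2, vcomp_idl. reflexivity.
  - apply (proj1 (H2 g')). simpl. rewrite whiskl_vcomp, <- vcomp_assoc, Hb, Ha.
    rewrite whiskl_id2, vcomp_idl. reflexivity.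
Qed.

End Unf.


Section Vcc.
Context {K : cat2}.

Definition vcc {A B : ob K} {f g g' h : hom A B} (b : cell g' h) (a : cell f g) (e : g = g') : cell f h :=
  vcomp b (cast2 (@cell K A B) eq_refl e a).

Lemma vcc_ceq {A B : ob K} {f g g' h f2 g2 g2' h2 : hom A B} (b : cell g' h) (a : cell f g) (e : g = g')
  (b2 : cell g2' h2) (a2 : cell f2 g2) (e2 : g2 = g2') :
  a ≈ a2 -> b ≈ b2 -> vcc b a e ≈ vcc b2 a2 e2.
Proof.
  intros Ha Hb. destruct e, e2. unfold vcc. simpl. apply vcomp_ceq; assumption.
Qed.

Lemma vcc_vcomp {A B : ob K} {f g g' h f2 g2 h2 : hom A B} (b : cell g' h) (a : cell f g) (e : g = g')
  (b2 : cell g2 h2) (a2 : cell f2 g2) :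
  a ≈ a2 -> b ≈ b2 -> vcc b a e ≈ vcomp b2 a2.
Proof.
  intros Ha Hb. destruct e. unfold vcc. simpl. apply vcomp_ceq; assumption.
Qed.

Lemma vcomp_vcc {A B : ob K} {f g g' h f2 g2 h2 : hom A B} (b : cell g' h) (a : cell f g) (e : g = g')
  (b2 : cell g2 h2) (a2 : cell f2 g2) :
  a2 ≈ a -> b2 ≈ b -> vcomp b2 a2 ≈ vcc b a e.
Proof. intros. apply ceq_sym, vcc_vcomp; apply ceq_sym; assumption. Qed.

Lemma vcc_assoc {A B : ob K} {f g g' h h' k : hom A B} (a : cell f g) (b : cell g' h) (c : cell h' k)
  (e1 : h = h') (e2 : g = g') (e3 : g = g') (e4 : h = h') :
  vcc c (vcc b a e2) e1 ≈ vcc (vcc c b e4) a e3.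
Proof.
  destruct e2, e1. rewrite (proof_irrelevance _ e3 eq_refl), (proof_irrelevance _ e4 eq_refl).
  unfold vcc; simpl. rewrite vcomp_assoc. apply ceq_refl.
Qed.

Lemma whiskl_vcc {A B C : ob K} (h : hom B C) {f g g' k : hom A B} (b : cell g' k) (a : cell f g) (e : g = g')
  (e' : h ⊚ g = h ⊚ g') :
  whiskl h (vcc b a e) ≈ vcc (whiskl h b) (whiskl h a) e'.
Proof.
  destruct e. rewrite (proof_irrelevance _ e' eq_refl). unfold vcc; simpl.
  rewrite whiskl_vcomp. apply ceq_refl.
Qed.

Lemma whiskr_vcc {A B C : ob K} (k : hom A B) {f g g' h : hom B C} (b : cell g' h) (a : cell f g) (e : g = g')
  (e' : g ⊚ k = g' ⊚ k) :
  whiskr k (vcc b a e) ≈ vcc (whiskr k b) (whiskr k a) e'.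
Proof.
  destruct e. rewrite (proof_irrelevance _ e' eq_refl). unfold vcc; simpl.
  rewrite whiskr_vcomp. apply ceq_refl.
Qed.

Lemma whiskl_idc {A B C : ob K} (h : hom B C) {f g f' : hom A B} (a : cell f g) :
  a ≈ id2 f' -> whiskl h a ≈ id2 (h ⊚ f').
Proof.
  intros [e1 [e2 H]]. destruct e1. simpl in H. destruct e2. simpl in H. subst.
  rewrite whiskl_id2. apply ceq_refl.
Qed.

Lemma whiskr_idc {A B C : ob K} (k : hom A B) {f g f' : hom B C} (a : cell f g) :
  a ≈ id2 f' -> whiskr k a ≈ id2 (f' ⊚ k).
Proof.
  intros [e1 [e2 H]]. destruct e1. simpl in H. destruct e2. simpl in H. subst.
  rewrite whiskr_id2. apply ceq_refl.
Qed.

Lemma whisk_theta {P Z : ob K} (w : hom P P) (theta : cell (id1 P) w) {a b a' b' : hom P Z}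
  (gam : cell a b) :
  whiskl a theta ≈ id2 a' -> whiskl b theta ≈ id2 b' -> whiskr w gam ≈ gam.
Proof.
  intros Ha Hb. pose proof (interchange K P P Z a b (id1 P) w gam theta) as I.
  eapply ceq_trans; [apply ceq_sym, (vcomp_idr_ceq _ _ Ha)|].
  rewrite I. eapply ceq_trans; [apply (vcomp_idl_ceq _ _ Hb)|]. apply whiskr_id1_ceq.
Qed.

End Vcc.

Ltac asc := solve [repeat rewrite ?comp1_assoc; reflexivity].


Section Dense.
Context {K : cat2}.

Definition idpsi {A B : ob K} (y : hom A B) : cell y (id1 B ⊚ y) :=
  cast2 (@cell K A B) eq_refl (eq_sym (comp1_idl _ _ _ y)) (id2 y).

Lemma id_abs_lifting {A B : ob K} (y : hom A B) : is_abs_left_lifting y y (id1 B) (idpsi y).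
Proof.
  intros D j k.
  apply (bij_ceq_cod (fun x : cell (y ⊚ j) k => x)); [reflexivity | symmetry; apply comp1_idl | |].
  - intros x. apply ceq_sym. eapply ceq_trans; [eapply vcomp_idr_ceq|apply whiskl_id1_ceq].
    eapply ceq_trans; [apply whiskr_assoc_ceq|]. apply whiskr_idc. apply ceq_cast.
  - split; [intros ? ? E; exact E | intros z; exists z; reflexivity].
Qed.

Lemma dense_left_ext (Y : good_yoneda_structure K) (C : ob K) (HC : adm_ob Y C)
  {X P : ob K} (c : hom X (PP Y C)) (p : hom P C) (q : hom P X)
  (lam : cell (yon Y C ⊚ p) (c ⊚ q)) :
  is_lax_pullback (yon Y C) c p q lam -> is_left_extension (yon Y C ⊚ p) q c lam.
Proof.
  intros HL.
  pose proof (yoneda_ii_good K Y C (PP Y C) (yon Y C) (id1 _) (idpsi _) HC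
                (adm_yon K Y C HC) (id_abs_lifting _)) as D.
  specialize (D X c P p q lam HL). intros k. specialize (D k).
  eapply bij_ceq; [ | | | | | exact D]; [apply comp1_idl | reflexivity | reflexivity | reflexivity |].
  intros x x' Hx. apply vcomp_ceq; [| apply whiskr_ceq; [reflexivity | exact Hx]].
  eapply ceq_trans; [apply pointwise_cell_ceq|].
  eapply ceq_trans; [eapply vcomp_idr_ceq|apply whiskl_id1_ceq].
  eapply ceq_trans; [apply whiskr_assoc_ceq|]. apply whiskr_idc. apply ceq_cast.
Qed.

End Dense.


Section LX.
Context {K : cat2}.

Lemma LX (Y : good_yoneda_structure K) (HK : finitely_complete (K := K)) (C : ob K)
  (HC : adm_ob Y C) {M L : ob K} (i : hom M (PP Y C)) (p : hom L C) (q : hom L M)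
  (lam : cell (yon Y C ⊚ p) (i ⊚ q)) (HL : is_lax_pullback (yon Y C) i p q lam) :
  is_pointwise_left_extension (yon Y C ⊚ p) q i lam.
Proof.
  intros X x P r s mu Hmu g'.
  set (y := yon Y C) in *.
  set (nu := pointwise_cell lam mu).
  destruct HK as [_ [_ HKl]]. destruct (HKl _ _ _ y (i ⊚ x)) as [L2 [p2 [q2 [lam2 HL2]]]].
  pose proof (dense_left_ext Y C HC (i ⊚ x) p2 q2 lam2 HL2) as E0.
  destruct (proj1 HL2 P (p ⊚ r) s (cast2 (@cell K P (PP Y C)) (eq_sym (comp1_assoc _ _ _)) eq_refl nu))
    as [t [[e1 [e2 Et]] _]].
  assert (Ht : whiskr t lam2 ≈ nu).
  { eapply ceq_trans; [apply ceq_sym, lax_whisk_ceq|].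
    eapply ceq_trans; [apply ceq_sym, (ceq_cast (f_equal (comp1 y) e1) (f_equal (comp1 (i ⊚ x)) e2))|].
    rewrite Et. apply ceq_cast. }
  destruct (proj1 HL L2 p2 (x ⊚ q2) (cast2 (@cell K L2 (PP Y C)) eq_refl (eq_sym (comp1_assoc i x q2)) lam2))
    as [u1 [[f1 [f2 Eu1]] _]].
  assert (Hu1 : whiskr u1 lam ≈ lam2).
  { eapply ceq_trans; [apply ceq_sym, lax_whisk_ceq|].
    eapply ceq_trans; [apply ceq_sym, (ceq_cast (f_equal (comp1 y) f1) (f_equal (comp1 i) f2))|].
    rewrite Eu1. apply ceq_cast. }
  destruct (proj1 Hmu L2 u1 q2 (cast2 (@cell K L2 M) eq_refl f2 (id2 (q ⊚ u1))))
    as [u [[g1 [g2 Eu]] _]].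
  assert (Hu : whiskr u mu ≈ id2 (q ⊚ u1)).
  { eapply ceq_trans; [apply ceq_sym, lax_whisk_ceq|].
    eapply ceq_trans; [apply ceq_sym, (ceq_cast (f_equal (comp1 q) g1) (f_equal (comp1 x) g2))|].
    rewrite Eu. apply ceq_cast. }
  assert (tu : t ⊚ u = id1 L2).
  { destruct (proj1 HL2 L2 p2 q2 lam2) as [t0 [_ Huniq]].
    transitivity t0; [symmetry|]; apply Huniq.
    - assert (e1' : p2 ⊚ (t ⊚ u) = p2) by (rewrite comp1_assoc, e1, <- comp1_assoc, g1, f1; reflexivity).
      assert (e2' : q2 ⊚ (t ⊚ u) = q2) by (rewrite comp1_assoc, e2, g2; reflexivity).
      exists e1', e2'. apply ceq_eq.
      eapply ceq_trans; [apply ceq_cast|]. eapply ceq_trans; [apply lax_whisk_ceq|].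
      eapply ceq_trans; [apply ceq_sym, whiskr_comp1_ceq|].
      eapply ceq_trans; [apply whiskr_ceq; [reflexivity|exact Ht]|].
      eapply ceq_trans; [apply whiskr_ceq; [reflexivity|apply pointwise_cell_ceq]|].
      rewrite whiskr_vcomp.
      eapply ceq_trans; [eapply vcomp_idl_ceq|].
      { eapply ceq_trans; [apply whisk_lr_ceq|]. apply whiskl_idc. exact Hu. }
      eapply ceq_trans; [apply whiskr_ceq; [reflexivity|apply whiskr_assoc_ceq]|].
      eapply ceq_trans; [apply whiskr_comp1_ceq|].
      eapply ceq_trans; [apply whiskr_ceq; [exact g1|apply ceq_refl]|].
      exact Hu1.
    - exists (comp1_idr _ _ _ p2), (comp1_idr _ _ _ q2). apply ceq_eq.
      eapply ceq_trans; [apply ceq_cast|]. eapply ceq_trans; [apply lax_whisk_ceq|].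
      apply whiskr_id1_ceq. }
  assert (Eb1 : p ⊚ r = p ⊚ (u1 ⊚ t)) by (rewrite comp1_assoc, f1, e1; reflexivity).
  assert (Eb2 : x ⊚ s = q ⊚ (u1 ⊚ t)) by (rewrite comp1_assoc, f2, <- comp1_assoc, e2; reflexivity).
  set (b1 := cast2 (@cell K P C) eq_refl Eb1 (id2 (p ⊚ r))).
  set (b2 := cast2 (@cell K P M) eq_refl Eb2 mu).
  assert (cond : vcomp (whiskl i b2) (lax_whisk lam r) = vcomp (lax_whisk lam (u1 ⊚ t)) (whiskl y b1)).
  { apply ceq_eq. apply ceq_trans with nu.
    - eapply ceq_trans; [|apply ceq_sym, pointwise_cell_ceq]. apply vcomp_ceq.
      + eapply ceq_trans; [apply lax_whisk_ceq|apply ceq_sym, whiskr_assoc_ceq].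
      + apply whiskl_ceq; [reflexivity|apply ceq_cast].
    - apply ceq_sym. eapply ceq_trans; [eapply vcomp_idr_ceq|].
      { apply whiskl_idc. apply ceq_cast. }
      eapply ceq_trans; [apply lax_whisk_ceq|].
      eapply ceq_trans; [apply ceq_sym, whiskr_comp1_ceq|].
      eapply ceq_trans; [apply whiskr_ceq; [reflexivity|exact Hu1]|]. exact Ht. }
  destruct (proj2 HL P r (u1 ⊚ t) b1 b2 cond) as [rho [[Hr1 Hr2] _]].
  assert (Ec2 : u1 ⊚ t = r ⊚ (u ⊚ t)) by (rewrite comp1_assoc, g1; reflexivity).
  assert (Ec3 : s ⊚ id1 P = s ⊚ (u ⊚ t)) by (rewrite comp1_assoc, g2, e2, comp1_idr; reflexivity).
  set (b1' := cast2 (@cell K P L) (eq_sym (comp1_idr _ _ _ r)) Ec2 rho).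
  set (b2' := cast2 (@cell K P X) eq_refl Ec3 (id2 (s ⊚ id1 P))).
  assert (cond' : vcomp (whiskl x b2') (lax_whisk mu (id1 P)) = vcomp (lax_whisk mu (u ⊚ t)) (whiskl q b1')).
  { apply ceq_eq. apply ceq_trans with mu.
    - eapply ceq_trans; [eapply vcomp_idl_ceq|].
      { apply whiskl_idc. apply ceq_cast. }
      eapply ceq_trans; [apply lax_whisk_ceq|]. apply whiskr_id1_ceq.
    - apply ceq_sym. eapply ceq_trans; [eapply vcomp_idl_ceq|].
      { eapply ceq_trans; [apply lax_whisk_ceq|].
        eapply ceq_trans; [apply ceq_sym, whiskr_comp1_ceq|]. apply whiskr_idc. exact Hu. }
      eapply ceq_trans; [apply whiskl_ceq; [reflexivity|apply ceq_cast]|].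
      rewrite Hr2. apply ceq_cast. }
  destruct (proj2 Hmu P (id1 P) (u ⊚ t) b1' b2' cond') as [th [[Ht1 Ht2] _]].
  assert (T0 : bijective_map (fun be : cell (y ⊚ p2) (g' ⊚ q2) => whiskr t be)).
  { assert (back : forall {a b : hom L2 (PP Y C)} (be : cell a b), whiskr u (whiskr t be) ≈ be).
    { intros a b be. eapply ceq_trans; [apply whiskr_comp1_ceq|].
      eapply ceq_trans; [apply whiskr_ceq; [exact tu|apply ceq_refl]|]. apply whiskr_id1_ceq. }
    split.
    - intros be be' E. apply ceq_eq. eapply ceq_trans; [apply ceq_sym, back|].
      rewrite E. apply back.
    - intros gam.
      assert (Ea : ((y ⊚ p2) ⊚ t) ⊚ u = y ⊚ p2)
        by (rewrite <- (comp1_assoc (y ⊚ p2) t u), tu, comp1_idr; reflexivity).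
      assert (Eb : ((g' ⊚ q2) ⊚ t) ⊚ u = g' ⊚ q2)
        by (rewrite <- (comp1_assoc (g' ⊚ q2) t u), tu, comp1_idr; reflexivity).
      exists (cast2 (@cell K L2 (PP Y C)) Ea Eb (whiskr u gam)). apply ceq_eq.
      eapply ceq_trans; [apply whiskr_ceq; [reflexivity|apply ceq_cast]|].
      eapply ceq_trans; [apply whiskr_comp1_ceq|].
      eapply whisk_theta with (theta := th).
      + assert (Q1 : (y ⊚ p2) ⊚ t = y ⊚ (p ⊚ r)) by (rewrite <- comp1_assoc, e1; reflexivity).
        eapply ceq_trans; [apply whiskl_ceq; [exact Q1|apply ceq_refl]|].
        eapply ceq_trans; [apply whiskl_comp1_ceq|]. apply whiskl_idc.
        eapply ceq_trans; [apply whiskl_comp1_ceq|].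
        eapply ceq_trans; [apply whiskl_ceq; [reflexivity|]|].
        { rewrite Ht1. apply ceq_cast. }
        rewrite Hr1. apply ceq_cast.
      + assert (Q2 : (g' ⊚ q2) ⊚ t = g' ⊚ s) by (rewrite <- comp1_assoc, e2; reflexivity).
        eapply ceq_trans; [apply whiskl_ceq; [exact Q2|apply ceq_refl]|].
        eapply ceq_trans; [apply whiskl_comp1_ceq|]. apply whiskl_idc.
        rewrite Ht2. apply ceq_cast. }
  pose proof (bij_comp _ _ (E0 g') T0) as H. simpl in H.
  eapply bij_ceq_cod; [| | | exact H].
  - rewrite <- comp1_assoc, e1, comp1_assoc. reflexivity.
  - rewrite <- comp1_assoc, e2. reflexivity.
  - intros ka. cbv beta. rewrite whiskr_vcomp. apply vcomp_ceq; [exact Ht|].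
    eapply ceq_trans; [apply whiskr_comp1_ceq|]. apply whiskr_ceq; [exact e2|apply ceq_refl].
Qed.

End LX.


Section Core.
Context {K : cat2}.

Lemma core (Y : good_yoneda_structure K) (HK : finitely_complete (K := K))
  (C A M : ob K) (i : hom M (PP Y C)) (f : hom C A)
  (L : ob K) (p : hom L C) (q : hom L M) (lam : cell (yon Y C ⊚ p) (i ⊚ q))
  (HC : small Y C) (Hf : admissible Y f) (HL : is_lax_pullback (yon Y C) i p q lam)
  (c : hom M A) (eta : cell i (homf1 Y f ⊚ c)) (phi : cell (f ⊚ p) (c ⊚ q))
  (E : vcomp (whiskl (homf1 Y f) phi) (whiskr_assoc (homf1 Y f) f (chi Y f) p)
       = vcomp (whiskr_assoc (homf1 Y f) c eta q) lam)
  (X : ob K) (x : hom X M) (P : ob K) (r : hom P L) (s : hom P X) (mu : cell (q ⊚ r) (x ⊚ s))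
  (Hmu : is_lax_pullback q x r s mu) (g : hom X A) :
  bijective_map (fun ka : cell (c ⊚ x) g => vcomp (whiskl (homf1 Y f) ka) (whiskr_assoc (homf1 Y f) c eta x))
  <-> bijective_map (fun ka : cell (c ⊚ x) g => vcomp (whiskr s ka) (pointwise_cell phi mu)).
Proof.
  pose proof (yoneda_i K Y C A f (proj1 HC) Hf) as Y1.
  pose proof (LX Y HK C (proj1 HC) i p q lam HL X x P r s mu Hmu ((homf1 Y f) ⊚ g)) as H2bij.
  pose proof (Y1 P (p ⊚ r) (g ⊚ s)) as G0bij.
  set (G := fun ga : cell ((f ⊚ p) ⊚ r) (g ⊚ s) =>
        cast2 (@cell K P (PP Y C)) (comp1_assoc (yon Y C) p r) (comp1_assoc (homf1 Y f) g s)
          (vcomp (whiskl (homf1 Y f) (cast2 (@cell K P A) (eq_sym (comp1_assoc f p r)) eq_refl ga))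
                 (whiskr_assoc (homf1 Y f) f (chi Y f) (p ⊚ r)))).
  assert (Gbij : bijective_map G).
  { eapply bij_ceq; [| | | | | exact G0bij]; [apply comp1_assoc | reflexivity | apply comp1_assoc | apply comp1_assoc |].
    intros a a' Ha. unfold G. apply ceq_sym. eapply ceq_trans; [apply ceq_cast|].
    apply vcomp_ceq; [apply ceq_refl|]. apply whiskl_ceq; [reflexivity|].
    eapply ceq_trans; [apply ceq_cast|]. apply ceq_sym, Ha. }
  refine (bij_square _ _ G _ _ Gbij H2bij).
  intros ka. apply ceq_eq. unfold G. cbv beta.
  eapply ceq_trans; [apply ceq_cast|].
  set (W1 := whiskl (homf1 Y f) (whiskr s ka)).
  set (W2 := whiskl (homf1 Y f) (whiskl c mu)).
  set (W3 := whiskl (homf1 Y f) (whiskr r phi)).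
  set (X0 := whiskr r (whiskr p (chi Y f))).
  set (V1 := whiskr r (whiskr q eta)).
  set (V0 := whiskr r lam).
  set (U1 := whiskr s (whiskr x eta)).
  set (U0 := whiskl i mu).
  apply ceq_trans with (vcc W1 (vcc W2 (vcc W3 X0 ltac:(asc)) ltac:(asc)) ltac:(asc)).
  { apply ceq_trans with (vcc (vcc W1 (vcc W2 W3 ltac:(asc)) ltac:(asc)) X0 ltac:(asc)).
    - apply vcomp_vcc.
      + eapply ceq_trans; [apply whiskr_assoc_ceq|]. apply ceq_sym, whiskr_comp1_ceq.
      + apply ceq_trans with (whiskl (homf1 Y f) (vcc (whiskr s ka) (vcc (whiskl c mu) (whiskr r phi) ltac:(asc)) ltac:(asc))).
        * apply whiskl_ceq; [reflexivity|]. eapply ceq_trans; [apply ceq_cast|].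
          apply vcomp_vcc; [|apply ceq_refl].
          eapply ceq_trans; [apply pointwise_cell_ceq|].
          apply vcomp_vcc; [apply whiskr_assoc_ceq|apply ceq_refl].
        * apply ceq_trans with (vcc (whiskl (homf1 Y f) (whiskr s ka)) (whiskl (homf1 Y f) (vcc (whiskl c mu) (whiskr r phi) ltac:(asc))) ltac:(asc)).
          -- apply whiskl_vcc.
          -- apply vcc_ceq; [apply whiskl_vcc|apply ceq_refl].
    - apply ceq_trans with (vcc W1 (vcc (vcc W2 W3 ltac:(asc)) X0 ltac:(asc)) ltac:(asc)).
      + apply ceq_sym, vcc_assoc.
      + apply vcc_ceq; [apply ceq_sym, vcc_assoc|apply ceq_refl]. }
  apply ceq_trans with (vcc W1 (vcc W2 (vcc V1 V0 ltac:(asc)) ltac:(asc)) ltac:(asc)).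
  { apply vcc_ceq; [|apply ceq_refl]. apply vcc_ceq; [|apply ceq_refl].
    apply ceq_trans with (whiskr r (vcomp (whiskl (homf1 Y f) phi) (whiskr_assoc (homf1 Y f) f (chi Y f) p))).
    - rewrite whiskr_vcomp. apply vcc_vcomp.
      + apply whiskr_ceq; [reflexivity|apply ceq_sym, whiskr_assoc_ceq].
      + apply ceq_sym, whisk_lr_ceq.
    - rewrite E, whiskr_vcomp. apply vcomp_vcc; [apply ceq_refl|].
      apply whiskr_ceq; [reflexivity|apply whiskr_assoc_ceq]. }
  apply ceq_trans with (vcc W1 (vcc (vcc W2 V1 ltac:(asc)) V0 ltac:(asc)) ltac:(asc)).
  { apply vcc_ceq; [|apply ceq_refl]. apply vcc_assoc. }
  apply ceq_trans with (vcc W1 (vcc (vcc U1 U0 ltac:(asc)) V0 ltac:(asc)) ltac:(asc)).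
  { apply vcc_ceq; [|apply ceq_refl]. apply vcc_ceq; [apply ceq_refl|].
    apply ceq_trans with (vcomp (whiskl ((homf1 Y f) ⊚ c) mu) (whiskr (q ⊚ r) eta)).
    - apply vcc_vcomp; [apply whiskr_comp1_ceq | apply ceq_sym, whiskl_comp1_ceq].
    - rewrite <- interchange. apply vcomp_vcc; [apply ceq_refl | apply ceq_sym, whiskr_comp1_ceq]. }
  apply ceq_trans with (vcc (vcc W1 U1 ltac:(asc)) (vcc U0 V0 ltac:(asc)) ltac:(asc)).
  { apply ceq_trans with (vcc W1 (vcc U1 (vcc U0 V0 ltac:(asc)) ltac:(asc)) ltac:(asc)).
    - apply vcc_ceq; [|apply ceq_refl]. apply ceq_sym, vcc_assoc.
    - apply vcc_assoc. }
  apply ceq_sym. apply vcomp_vcc.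
  - eapply ceq_trans; [apply pointwise_cell_ceq|].
    apply vcomp_vcc; [apply whiskr_assoc_ceq|apply ceq_refl].
  - rewrite whiskr_vcomp. apply vcomp_vcc.
    + apply whiskr_ceq; [reflexivity|apply whiskr_assoc_ceq].
    + apply whisk_lr_ceq.
Qed.

End Core.


Theorem corollary3p14 (K : cat2) (Y : good_yoneda_structure K)
  (HK : finitely_complete (K := K))
  (C A M : ob K) (i : hom M (PP Y C)) (f : hom C A)
  (L : ob K) (p : hom L C) (q : hom L M) (lam : cell (yon Y C ⊚ p) (i ⊚ q)) :
  small Y C -> adm_ob Y M -> admissible Y f ->
  is_lax_pullback (yon Y C) i p q lam ->
  ((exists (c : hom M A) (eta : cell i (homf1 Y f ⊚ c)), is_colimit Y i f c eta)
   <->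
   (exists (k : hom M A) (phi : cell (f ⊚ p) (k ⊚ q)),
      admissible Y k /\ is_pointwise_left_extension (f ⊚ p) q k phi))
  /\
  (forall (c : hom M A) (eta : cell i (homf1 Y f ⊚ c))
          (k : hom M A) (phi : cell (f ⊚ p) (k ⊚ q)),
     is_colimit Y i f c eta ->
     admissible Y k -> is_pointwise_left_extension (f ⊚ p) q k phi ->
     iso1 k c).
Proof.
  intros HC HM Hf HL.
  assert (back : forall (k : hom M A) (phi : cell (f ⊚ p) (k ⊚ q)), admissible Y k ->
            is_pointwise_left_extension (f ⊚ p) q k phi ->
            exists eta, is_colimit Y i f k eta).
  { intros k phi Hk Hpw.
    pose proof (dense_left_ext Y C (proj1 HC) i p q lam HL (homf1 Y f ⊚ k)) as D.
    destruct (proj2 D (cast2 (@cell K L (PP Y C)) eq_refl (comp1_assoc (homf1 Y f) k q)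
               (vcomp (whiskl (homf1 Y f) phi) (whiskr_assoc (homf1 Y f) f (chi Y f) p))))
      as [eta Heta].
    assert (E : vcomp (whiskl (homf1 Y f) phi) (whiskr_assoc (homf1 Y f) f (chi Y f) p)
                = vcomp (whiskr_assoc (homf1 Y f) k eta q) lam).
    { apply ceq_eq. eapply ceq_trans; [apply ceq_sym, (ceq_cast eq_refl (comp1_assoc (homf1 Y f) k q))|].
      rewrite <- Heta. apply vcomp_ceq; [apply ceq_refl|]. apply ceq_sym, whiskr_assoc_ceq. }
    exists eta. split; [exact Hk|]. intros D' j g.
    pose proof HK as HK'. destruct HK' as [_ [_ HKl]].
    destruct (HKl _ _ _ q j) as [P [r [s [mu Hmu]]]].
    apply (proj2 (core Y HK C A M i f L p q lam HC Hf HL k eta phi E D' j P r s mu Hmu g)).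
    exact (Hpw D' j P r s mu Hmu g). }
  split; [split|].
  - intros [c [eta [Hc Habs]]].
    pose proof (yoneda_i K Y C A f (proj1 HC) Hf) as Y1.
    destruct (proj2 (Y1 L p (c ⊚ q)) (vcomp (whiskr_assoc (homf1 Y f) c eta q) lam)) as [phi E].
    exists c, phi. split; [exact Hc|]. intros X x P r s mu Hmu g.
    apply (proj1 (core Y HK C A M i f L p q lam HC Hf HL c eta phi E X x P r s mu Hmu g)).
    exact (Habs X x g).
  - intros [k [phi [Hk Hpw]]]. destruct (back k phi Hk Hpw) as [eta H]. exists k, eta. exact H.
  - intros c eta k phi [Hc Habs] Hk Hpw. destruct (back k phi Hk Hpw) as [eta' [_ Habs']].
    apply (liftings_iso i k c (homf1 Y f) eta' eta); apply abs_lifting_lifting; assumption.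
Qed.
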